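(* Let $n\ge 3$ and $1\le k\le n-1$. Then \[ I_{k-1} \subseteq \bigcap_{1\le i<j\le n-1} P_{ij} \;\cap\; \mathcal J_{K_n} \;\cap\; \bigcap_{t=k}^{n-1}P_{tn}. \]
   Context: Let $\Bbbk$ be a field and $R=\Bbbk[x_1,\dots,x_n,y_1,\dots,y_n]$ the standard graded polynomial ring. For $1\le i<j\le n$ put $f_{ij}=x_iy_j-x_jy_i$ and $g_{ij}=x_ix_j-y_iy_j$. The parity binomial edge ideal of the complete graph $K_n$ is $\mathcal I_{K_n}=(g_{ij}\mid 1\le i<j\le n)$. Let $\mathcal J_{K_n}=\mathcal I_{K_n}:(\prod_{i=1}^n x_iy_i)^\infty=\bigcup_{t\ge1}\mathcal I_{K_n}:(\prod_{i=1}^n x_iy_i)^t$. For $I\subseteq[n]$ let $\mathfrak m_I=(x_i,y_i\mid i\in I)$, and for $1\le i<j\le n$ let $P_{ij}=(g_{ij})+\mathfrak m_{[n]\setminus\{i,j\}}$. Define $I_0=\mathcal I_{K_n}$ and inductively $I_k=I_{k-1}+(f_{kn})$ for $1\le k\le n-1$. *)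

(* Defs.v *)
From HB Require Import structures.
From mathcomp Require Import all_boot all_order all_algebra.
Unset Printing Implicit Defensive.
Import GRing.Theory.
Local Open Scope ring_scope.

(* mpoly K m = K[z_0, ..., z_{m-1}], with z_{m-1} the outermost variable *)
Fixpoint mpoly (K : fieldType) (m : nat) : comNzRingType :=
  match m with
  | 0 => K
  | m'.+1 => ({poly mpoly K m'} : comNzRingType)
  end.

(* the variable z_j of mpoly K m (for j < m; junk value 0 otherwise) *)
Fixpoint mvar (K : fieldType) (m : nat) (j : nat) : mpoly K m :=
  match m return mpoly K m with
  | 0 => 0
  | m'.+1 => if j == m' then ('X : {poly mpoly K m'}) else (mvar K m' j)%:P
  end.

Definition in_ideal (A : comNzRingType) (G : A -> Prop) (f : A) : Prop :=
  exists s : seq (A * A)%type,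
    (forall p, p \in s -> G p.2) /\ f = \sum_(p <- s) p.1 * p.2.

(* R = K[x_1..x_n, y_1..y_n] with x_i = z_{i-1}, y_i = z_{n+i-1} *)
Definition Rn (K : fieldType) (n : nat) : comNzRingType := mpoly K (2 * n).
Definition xv (K : fieldType) (n i : nat) : Rn K n := mvar K (2 * n) i.-1.
Definition yv (K : fieldType) (n i : nat) : Rn K n := mvar K (2 * n) (n + i.-1).

Definition fb (K : fieldType) (n i j : nat) : Rn K n :=
  xv K n i * yv K n j - xv K n j * yv K n i.
Definition gb (K : fieldType) (n i j : nat) : Rn K n :=
  xv K n i * xv K n j - yv K n i * yv K n j.

Definition IKn (K : fieldType) (n : nat) : Rn K n -> Prop :=
  in_ideal _ (fun h => exists i j, [/\ (1 <= i)%N, (i < j)%N, (j <= n)%N & h = gb K n i j]).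

(* J_{K_n} = I_{K_n} : (prod_i x_i y_i)^infty *)
Definition JKn (K : fieldType) (n : nat) (f : Rn K n) : Prop :=
  exists t : nat, (1 <= t)%N /\
    IKn K n ((\prod_(1 <= i < n.+1) (xv K n i * yv K n i)) ^+ t * f).

Definition Pij (K : fieldType) (n i j : nat) : Rn K n -> Prop :=
  in_ideal _ (fun h => h = gb K n i j \/
    exists l, [/\ (1 <= l)%N, (l <= n)%N, l != i, l != j & (h = xv K n l \/ h = yv K n l)]).

Definition Ik (K : fieldType) (n k : nat) : Rn K n -> Prop :=
  in_ideal _ (fun h => (exists i j, [/\ (1 <= i)%N, (i < j)%N, (j <= n)%N & h = gb K n i j])
    \/ (exists s, [/\ (1 <= s)%N, (s <= k)%N & h = fb K n s n])).

(* Main.v *)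
Require Import Defs.
From HB Require Import structures.
From mathcomp Require Import all_boot all_order all_algebra.
From mathcomp Require Import ring zify.
Import GRing.Theory.
Local Open Scope ring_scope.

Section Ideals.
Variable A : comNzRingType.
Implicit Types G H : A -> Prop.

Lemma ii0 G : in_ideal _ G 0.
Proof. exists [::]; split; first by []. by rewrite big_nil. Qed.

Lemma iigen G g : G g -> in_ideal _ G g.
Proof.
move=> Gg; exists [:: (1, g)]; split.
  by move=> p; rewrite inE => /eqP ->.
by rewrite big_cons big_nil /= mul1r addr0.
Qed.

Lemma iiD G u v : in_ideal _ G u -> in_ideal _ G v -> in_ideal _ G (u + v).
Proof.
move=> [s [Hs ->]] [t [Ht ->]]; exists (s ++ t); split.
  by move=> p; rewrite mem_cat => /orP [] ?; [apply: Hs|apply: Ht].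
by rewrite big_cat.
Qed.

Lemma iiM G c u : in_ideal _ G u -> in_ideal _ G (c * u).
Proof.
move=> [s [Hs ->]]; exists [seq (c * p.1, p.2) | p <- s]; split.
  by move=> p /mapP [q qs ->]; apply: (Hs q).

rewrite big_map big_distrr /=; apply: eq_bigr => p _; by rewrite mulrA.
Qed.

Lemma iiB G u v : in_ideal _ G u -> in_ideal _ G v -> in_ideal _ G (u - v).
Proof. move=> hu hv; apply: iiD => //; rewrite -mulN1r; exact: iiM. Qed.

Lemma iisub G H c f : (forall g, G g -> in_ideal _ H (c * g)) ->
  in_ideal _ G f -> in_ideal _ H (c * f).
Proof.
move=> hG [s [Hs ->]]; elim: s Hs => [|p s IH] Hs.
  by rewrite big_nil mulr0; apply: ii0.
rewrite big_cons mulrDr; apply: iiD.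
  rewrite mulrCA; apply: iiM; apply: hG; apply: Hs; exact: mem_head.
apply: IH => q qs; apply: Hs; by rewrite inE qs orbT.
Qed.
Lemma id1 (a b c d : A) : a*b - c*d = (b*a - d*c).
Proof. by rewrite (mulrC a) (mulrC c). Qed.
Lemma id2 (xl yl r xs yn xn ys : A) : xl * r * (xs * yn - xn * ys) =
  r * (yn * (xs * xl - ys * yl)) - r * (ys * (xn * xl - yn * yl)).
Proof. ring. Qed.
End Ideals.

Definition GI (K : fieldType) (n : nat) : Rn K n -> Prop :=
  fun h => exists i j, [/\ (1 <= i)%N, (i < j)%N, (j <= n)%N & h = gb K n i j].

Lemma gen_any (K : fieldType) n a b : (1 <= a)%N -> (1 <= b)%N -> (a <= n)%N ->
  (b <= n)%N -> a != b -> in_ideal _ (GI K n) (gb K n a b).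
Proof.
move=> a1 b1 an bn ab; case: (ltnP a b) => hab.
  by apply: iigen; exists a, b; split.
have hba : (b < a)%N by rewrite ltn_neqAle eq_sym ab.
have -> : gb K n a b = gb K n b a.
  by rewrite /gb; apply: id1.

by apply: iigen; exists b, a; split.
Qed.

Lemma prod_split (K : fieldType) n l : (1 <= l)%N -> (l <= n)%N ->
  exists r, \prod_(1 <= i < n.+1) (xv K n i * yv K n i) = xv K n l * r.
Proof.
move=> l1 ln.
have li : l \in index_iota 1 n.+1 by rewrite mem_index_iota; apply/andP; split.
rewrite (bigD1_seq l li (iota_uniq _ _)) /=.
by eexists; rewrite -mulrA.
Qed.

Theorem lemma3p2 (K : fieldType) (n k : nat) :
  (3 <= n)%N -> (1 <= k)%N -> (k <= n - 1)%N ->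
  forall f : Rn K n, Ik K n (k - 1) f ->
    (forall i j, (1 <= i)%N -> (i < j)%N -> (j <= n - 1)%N -> Pij K n i j f) /\
    JKn K n f /\
    (forall t, (k <= t)%N -> (t <= n - 1)%N -> Pij K n t n f).
Proof.
move=> n3 k1 kn f; rewrite /Ik => hf.
have Pg : forall i j a b, (1 <= a)%N -> (a < b)%N -> (b <= n)%N -> (i < j)%N ->
    Pij K n i j (gb K n a b).
  move=> i j a b a1 ab bn ij.
  have [/andP [/eqP -> /eqP ->]|] := boolP ((a == i) && (b == j)).
    by apply: iigen; left.
  rewrite negb_and => hne.
  have [hai|hai] := boolP ((a != i) && (a != j)).
    case/andP: hai => ??.
    rewrite /gb (mulrC (xv K n a)) (mulrC (yv K n a)); apply: iiB; apply: iiM;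
      apply: iigen; right; exists a; split => //; try lia; by [left|right].
  have [hbi|hbi] := boolP ((b != i) && (b != j)).
    case/andP: hbi => ??.
    rewrite /gb; apply: iiB; apply: iiM;
      apply: iigen; right; exists b; split => //; try lia; by [left|right].
  exfalso; move: hne hai hbi; rewrite !negb_and !negbK.
  case/orP=> /eqP h1; case/orP=> /eqP h2; case/orP=> /eqP h3; lia.
have Pf : forall i j s, (n != i) -> (n != j) ->
    Pij K n i j (fb K n s n).
  move=> i j s ni nj; rewrite /fb; apply: iiB.
    apply: iiM; apply: iigen; right; exists n; split => //; try lia; by right.
  rewrite mulrC; apply: iiM; apply: iigen; right; exists n; split => //; try lia; by left.
have Pf2 : forall i j s, (1 <= s)%N -> (s <= n)%N -> s != i -> s != j ->
    Pij K n i j (fb K n s n).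
  move=> i j s s1 sn si sj; rewrite /fb; apply: iiB.
    rewrite mulrC; apply: iiM; apply: iigen; right; exists s; split => //; by left.
  apply: iiM; apply: iigen; right; exists s; split => //; by right.
split; [|split].
- move=> i j i1 ij jn; rewrite /Pij -[f]mul1r; apply: (iisub _ _ _ _ _ _ hf) => g.
  rewrite mul1r; case=> [[a [b [a1 ab bn ->]]]|[s [s1 sk ->]]].
    by apply: Pg.
  apply: Pf => //; apply/eqP; lia.
- exists 1%N; split => //; rewrite expr1; apply: (iisub _ _ _ _ _ _ hf) => g.
  case=> [[a [b [a1 ab bn ->]]]|[s [s1 sk ->]]].
    by apply: iiM; apply: iigen; exists a, b; split.
  pose l := if s == 1%N then 2%N else 1%N.
  have l1 : (1 <= l)%N by rewrite /l; case: ifP.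
  have ln : (l <= n)%N by rewrite /l; case: ifP => _; lia.
  have ls : l != s by rewrite /l; case: ifP => /eqP h; apply/eqP; lia.
  have lnn : l != n by rewrite /l; case: ifP => _; apply/eqP; lia.
  have [r ->] := prod_split K n l l1 ln.
  have -> : xv K n l * r * fb K n s n =
      r * (yv K n n * gb K n s l) - r * (yv K n s * gb K n n l)
    by rewrite /fb /gb; apply: id2.
  apply: iiB; apply: iiM; apply: iiM; apply: gen_any => //;
    try by rewrite eq_sym.
  all: try lia.
- move=> t kt tn; rewrite /Pij -[f]mul1r; apply: (iisub _ _ _ _ _ _ hf) => g.
  rewrite mul1r; case=> [[a [b [a1 ab bn ->]]]|[s [s1 sk ->]]].
    by apply: Pg => //; lia.
  apply: Pf2 => //; try apply/eqP; lia.
Qed.
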